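(* Let $G$ be a $\tau$-regular undirected graph with node set $V$, adjacency matrix $A$, and a partition $V=S\cup T$, $S\cap T=\emptyset$, with exactly $m$ edges between $S$ and $T$. Consider the GNN $H_0=X\in\mathbb{R}^{|V|\times d}$, $H_{l+1}=\sigma(H_lW_{1l}^\top+AH_lW_{2l}^\top)$ for $l=0,1,\dots$, where $\sigma$ is the entrywise ReLU and $W_{1l},W_{2l}\in\mathbb{R}^{d\times d}$ satisfy $\|W_{1l}\|_{1\to1}\le1$, $\|W_{2l}\|_{1\to1}\le1$. Let $\alpha\in\mathbb{R}^{|V|\times d}$ satisfy $|\alpha_{ij}|\le\epsilon$ for $i\in S$ and $\alpha_{ij}=0$ for $i\in T$, and let $\varepsilon_l=H_l(X+\alpha)-H_l(X)$, where $H_l(\cdot)$ denotes the $l$-th layer output as a function of the input features. Then for every $l\ge0$ there exist $V_l\in\mathbb{R}^{d}_{\ge0}$ with $\|V_l\|_1\le d$ and $r_l\in\mathbb{R}^{|V|\times d}$ with $\sum_{i,j}|(r_l)_{ij}|\le 2d\epsilon m(l+1)(\tau+1)^l$ such that, entrywise, $$|(\varepsilon_l)_{ij}|\le \epsilon(\tau+1)^l\,(V_l)_j\,(\mathbf{1}_S)_i+(r_l)_{ij}\quad\text{for all } i\in V,\ j\in\{1,\dots,d\}.$$ In particular $\sum_{i\in T}\sum_j|(\varepsilon_l)_{ij}|\le 2d\epsilon m(l+1)(\tau+1)^l$.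
   Context: $\mathbf{1}_S\in\{0,1\}^{|V|}$ is the indicator vector of $S$. For $W\in\mathbb{R}^{d\times d}$, $\|W\|_{1\to1}=\max_k\sum_j|W_{jk}|$ is the operator norm induced by the $\ell_1$ norm (maximum absolute column sum). For a vector $V$, $\|V\|_1=\sum_j|V_j|$. *)

(* Defs.v *)
From mathcomp Require Import all_boot all_order all_algebra.
Set Implicit Arguments. Unset Strict Implicit. Unset Printing Implicit Defensive.
Import Order.TTheory GRing.Theory Num.Theory.
Local Open Scope ring_scope.

Definition undirected n (e : rel 'I_n) := (forall i j, e i j = e j i) /\ (forall i, ~~ e i i).
Definition regular n (e : rel 'I_n) (tau : nat) := forall i, #|[set j | e i j]| = tau.

Definition adjmx (R : nzRingType) n (e : rel 'I_n) : 'M[R]_n :=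
  \matrix_(i, j) (e i j)%:R.

(* number of (undirected) edges between S and its complement:
   ordered pairs (i,j) with i in S, j not in S *)
Definition cut_edges n (e : rel 'I_n) (S : {set 'I_n}) : nat :=
  #|[set p : 'I_n * 'I_n | [&& p.1 \in S, p.2 \notin S & e p.1 p.2]]|.

(* operator norm induced by l1: maximum absolute column sum *)
Definition norm11 (R : realDomainType) d (W : 'M[R]_d) : R :=
  \big[Num.max/0]_(k < d) \sum_(j < d) `|W j k|.

Definition relu (R : realDomainType) (x : R) : R := Num.max x 0.

Fixpoint gnn (R : realDomainType) n d (A : 'M[R]_n) (W1 W2 : nat -> 'M[R]_d)
  (X : 'M[R]_(n, d)) (l : nat) : 'M[R]_(n, d) :=
  match l with
  | 0 => X
  | l'.+1 => let H := gnn A W1 W2 X l' in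
             map_mx (@relu R) (H *m (W1 l')^T + A *m H *m (W2 l')^T)
  end.

Definition indic (R : nzRingType) n (S : {set 'I_n}) (i : 'I_n) : R := (i \in S)%:R.

(* Main.v *)
Require Import Defs.
From mathcomp Require Import all_boot all_order all_algebra.
From mathcomp Require Import ring lra.
Import Order.TTheory GRing.Theory Num.Theory.
Local Open Scope ring_scope.

Lemma sum_bool_card (R : realFieldType) (I : finType) (P : pred I) :
  \sum_i ((P i)%:R : R) = (#|P|)%:R.
Proof.
rewrite -sum1_card natr_sum [RHS]big_mkcond /=.
apply: eq_bigr => i _. have -> : (i \in P) = P i by []. by case: (P i).
Qed.

Lemma colsum_le (R : realFieldType) d (W : 'M[R]_d) k : norm11 W <= 1 ->
  \sum_j `|W j k| <= 1.
Proof.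
move=> h; apply: le_trans h; rewrite /norm11.
exact: (le_bigmax 0 (fun k => \sum_(j < d) `|W j k|) k).
Qed.

Lemma colsum_weight (R : realFieldType) d (W : 'M[R]_d) (f : 'I_d -> R) :
  norm11 W <= 1 -> (forall k, 0 <= f k) ->
  \sum_j \sum_k `|W j k| * f k <= \sum_k f k.
Proof.
move=> hW hf; rewrite exchange_big /=; apply: ler_sum => k _.
rewrite -mulr_suml; apply: ler_piMl => //; exact: colsum_le.
Qed.

Arguments colsum_weight {R d W f}.

Lemma relu_lip (R : realFieldType) (a b : R) : `|relu a - relu b| <= `|a - b|.
Proof.
have h1 := ler_norm (a - b).
have h2 : - (a - b) <= `|a - b| by rewrite -normrN; exact: ler_norm.
rewrite /relu.
case: (lerP a 0) => ha; case: (lerP b 0) => hb;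
  rewrite ?(max_r ha) ?(max_r hb) ?(max_l (ltW ha)) ?(max_l (ltW hb));
  rewrite ler_norml; apply/andP; split; lra.
Qed.

Lemma step_bound (R : realFieldType) n d (e : rel 'I_n) (W1 W2 : 'M[R]_d)
  (H1 H2 : 'M[R]_(n, d)) i j :
  `|(map_mx (@relu R) (H1 *m W1^T + adjmx R e *m H1 *m W2^T)
     - map_mx (@relu R) (H2 *m W1^T + adjmx R e *m H2 *m W2^T)) i j|
  <= \sum_k `|W1 j k| * `|(H1 - H2) i k|
     + \sum_k `|W2 j k| * (\sum_i' (e i i')%:R * `|(H1 - H2) i' k|).
Proof.
rewrite !mxE; eapply le_trans; [apply: relu_lip|].
rewrite ?mxE.
set s1 := \sum_k _; set s2 := \sum_k _; set t1 := \sum_k _; set t2 := \sum_k _.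
have E1 : s1 - t1 = \sum_k W1 j k * (H1 i k - H2 i k).
  rewrite /s1 /t1 -sumrB; apply: eq_bigr => k _; rewrite !mxE; ring.
have E2 : s2 - t2 = \sum_k W2 j k * (\sum_i' (e i i')%:R * (H1 i' k - H2 i' k)).
  rewrite /s2 /t2 -sumrB; apply: eq_bigr => k _; rewrite !mxE -mulrBl -sumrB.
  rewrite mulrC; congr (_ * _); apply: eq_bigr => i' _; rewrite !mxE; ring.
have -> : s1 + s2 - (t1 + t2) = (s1 - t1) + (s2 - t2) by ring.
rewrite E1 E2; apply: le_trans (ler_normD _ _) _; apply: lerD.
  apply: le_trans (ler_norm_sum _ _ _) _; apply: ler_sum => k _; rewrite normrM.
  by rewrite !mxE.
apply: le_trans (ler_norm_sum _ _ _) _; apply: ler_sum => k _; rewrite normrM.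
apply: ler_wpM2l; first exact: normr_ge0.
apply: le_trans (ler_norm_sum _ _ _) _; apply: ler_sum => i' _; rewrite normrM.
by rewrite ger0_norm ?ler0n // !mxE.
Qed.

Lemma deg_sum (R : realFieldType) n (e : rel 'I_n) tau :
  undirected e -> regular e tau -> forall i',
  \sum_i ((e i i')%:R : R) = tau%:R.
Proof.
move=> [sym _] reg i'.
under eq_bigr => i _ do rewrite sym.
rewrite (@sum_bool_card R _ (e i')) -(reg i') cardsE; congr (_%:R).
Qed.

Lemma nbr_le (R : realFieldType) n (e : rel 'I_n) tau (S : {set 'I_n}) :
  undirected e -> regular e tau -> forall i,
  \sum_i' ((e i i')%:R * indic R S i') <= tau%:R.
Proof.
move=> und reg i.
have <- : \sum_i' ((e i i')%:R : R) = tau%:R.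
  by rewrite (@sum_bool_card R _ (e i)) -(reg i) cardsE.
apply: ler_sum => i' _; rewrite /indic.
by case: (e i i'); case: (i' \in S); rewrite ?mulr1 ?mulr0 ?mul0r.
Qed.

Lemma cut_sum (R : realFieldType) n (e : rel 'I_n) (S : {set 'I_n}) :
  undirected e ->
  \sum_i ((i \notin S)%:R * \sum_i' ((e i i')%:R * indic R S i')) =
  (cut_edges e S)%:R :> R.
Proof.
move=> [sym _].
have -> : \sum_i ((i \notin S)%:R * \sum_i' ((e i i')%:R * indic R S i')) =
   \sum_i \sum_i' (([&& i' \in S, i \notin S & e i' i])%:R : R).
  apply: eq_bigr => i _; rewrite mulr_sumr; apply: eq_bigr => i' _.
  rewrite /indic sym.
  by case: (i' \in S); case: (i \notin S); case: (e i' i); rewrite /= ?mulr1 ?mulr0 ?mul0r.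
rewrite exchange_big pair_big /=.
rewrite (@sum_bool_card R _ [pred p : 'I_n * 'I_n | [&& p.1 \in S, p.2 \notin S & e p.1 p.2]]).
rewrite /cut_edges cardsE; congr (_%:R); try (apply: eq_card => p; rewrite !inE).
Qed.

Lemma main_pos (R : realFieldType) (n d tau : nat) (e : rel 'I_n)
  (S : {set 'I_n}) (W1 W2 : nat -> 'M[R]_d) (X alpha : 'M[R]_(n, d)) (eps : R) :
  undirected e -> regular e tau ->
  (forall l, norm11 (W1 l) <= 1) -> (forall l, norm11 (W2 l) <= 1) ->
  (forall i j, i \in S -> `|alpha i j| <= eps) ->
  (forall i j, i \notin S -> alpha i j = 0) -> 0 <= eps ->
  forall l, exists (V : 'I_d -> R) (r : 'M[R]_(n, d)),
   [/\ (forall j, 0 <= V j), \sum_j V j <= d%:R, (forall i j, 0 <= r i j),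
       \sum_i \sum_j r i j <= 2 * d%:R * eps * (cut_edges e S)%:R * l.+1%:R * (tau.+1)%:R ^+ l
     & forall i j, `|(gnn (adjmx R e) W1 W2 (X + alpha) l - gnn (adjmx R e) W1 W2 X l) i j|
         <= eps * (tau.+1)%:R ^+ l * V j * indic R S i + r i j].
Proof.
move=> und reg hW1 hW2 haS haT heps.
have tau'0 : 0 < (tau.+1)%:R :> R by rewrite ltr0n.
have taupos : 0 <= tau%:R :> R by rewrite ler0n.
have tauS : (tau.+1)%:R = tau%:R + 1 :> R by rewrite -addn1 natrD.
have ind0 : forall i, 0 <= indic R S i by move=> i; rewrite /indic ler0n.
elim=> [|l [V [r [hV0 hVs hr0 hrs hb]]]].
  exists (fun _ => 1), 0; split.
  - by move=> _; exact: ler01.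
  - by rewrite sumr_const card_ord.
  - by move=> i j; rewrite mxE.
  - under eq_bigr => i _ do under eq_bigr => j _ do rewrite mxE.
    rewrite big1 ?big1 //.
    by rewrite !mulr_ge0 ?ler0n ?exprn_ge0 ?ler0n.
  move=> i j /=; rewrite !mxE expr0 mulr1 mulr1 addr0.
  have -> : X i j + alpha i j - X i j = alpha i j by ring.
  rewrite /indic; case: (boolP (i \in S)) => hi.
    by rewrite mulr1; exact: haS.
  by rewrite mulr0 haT // normr0.
set c := eps * (tau.+1)%:R ^+ l.
have c0 : 0 <= c by rewrite /c mulr_ge0 // exprn_ge0 // ltW.
pose N i := \sum_i' ((e i i')%:R * indic R S i').
have N0 : forall i, 0 <= N i.
  by move=> i; apply: sumr_ge0 => i' _; rewrite mulr_ge0 ?ler0n.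
pose a1 j := \sum_k `|W1 l j k| * V k.
pose a2 j := \sum_k `|W2 l j k| * V k.
have a10 : forall j, 0 <= a1 j.
  by move=> j; apply: sumr_ge0 => k _; rewrite mulr_ge0.
have a20 : forall j, 0 <= a2 j.
  by move=> j; apply: sumr_ge0 => k _; rewrite mulr_ge0.
pose V' j := (a1 j + tau%:R * a2 j) / (tau.+1)%:R.
pose b1 i j := \sum_k `|W1 l j k| * r i k.
pose b2 i j := \sum_k `|W2 l j k| * (\sum_i' (e i i')%:R * r i' k).
pose r' := \matrix_(i, j) (b1 i j + b2 i j + (i \notin S)%:R * c * N i * a2 j).
exists V', r'; split.
- move=> j; apply: divr_ge0; last exact: ltW.
  by apply: addr_ge0 => //; apply: mulr_ge0.
- rewrite /V' -mulr_suml big_split /= -mulr_sumr ler_pdivrMr //.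
  have s1 : \sum_j a1 j <= d%:R := le_trans (colsum_weight (hW1 l) hV0) hVs.
  have s2 : \sum_j a2 j <= d%:R := le_trans (colsum_weight (hW2 l) hV0) hVs.
  have s20 : 0 <= \sum_j a2 j by apply: sumr_ge0.
  rewrite tauS; nra.
- move=> i j; rewrite /r' mxE; apply: addr_ge0; first apply: addr_ge0.
  + by apply: sumr_ge0 => k _; rewrite mulr_ge0.
  + apply: sumr_ge0 => k _; rewrite mulr_ge0 //; apply: sumr_ge0 => i' _.
    by rewrite mulr_ge0 ?ler0n.
  + apply: mulr_ge0; last exact: a20. apply: mulr_ge0; last exact: N0.
    by apply: mulr_ge0; rewrite ?ler0n.
- rewrite /r'.
  under eq_bigr => i _ do under eq_bigr => j _ do rewrite mxE.
  under eq_bigr => i _ do rewrite big_split big_split /=.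
  rewrite big_split big_split /=.
  have h1 : \sum_i \sum_j b1 i j <= \sum_i \sum_j r i j.
    by apply: ler_sum => i _; apply: colsum_weight => // k.
  have h2 : \sum_i \sum_j b2 i j <= tau%:R * \sum_i \sum_j r i j.
    apply: (@le_trans _ _ (\sum_i \sum_k \sum_i' (e i i')%:R * r i' k)).
      apply: ler_sum => i _; apply: colsum_weight => // k.
      by apply: sumr_ge0 => i' _; rewrite mulr_ge0 ?ler0n.
    rewrite exchange_big /=.
    under eq_bigr => k _ do rewrite exchange_big /=.
    under eq_bigr => k _ do under eq_bigr => i' _ do rewrite -mulr_suml.
    under eq_bigr => k _ do under eq_bigr => i' _ do rewrite (@deg_sum R n e tau und reg i').
    rewrite exchange_big /= mulr_sumr; apply: ler_sum => i' _.
    rewrite mulr_sumr; apply: ler_sum => k _; exact: lexx.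
  have h3 : \sum_i \sum_j ((i \notin S)%:R * c * N i * a2 j) <= c * d%:R * (cut_edges e S)%:R.
    apply: (@le_trans _ _ (\sum_i ((i \notin S)%:R * c * N i) * d%:R)).
      apply: ler_sum => i _; rewrite -mulr_sumr; apply: ler_wpM2l.
        by apply: mulr_ge0 => //; apply: mulr_ge0 => //; rewrite ler0n.
      exact: le_trans (colsum_weight (hW2 l) hV0) hVs.
    rewrite -(@cut_sum R n e S und) mulr_sumr; apply: ler_sum => i _.
    rewrite /N le_eqVlt; apply/orP; left; apply/eqP; ring.
  set Sr := \sum_i \sum_j r i j in h1 h2 hrs *.
  have Sr0 : 0 <= Sr by apply: sumr_ge0 => i _; apply: sumr_ge0 => j _.
  apply: le_trans (lerD (lerD h1 h2) h3) _.
  set Q := d%:R * eps * (cut_edges e S)%:R * (tau.+1)%:R ^+ l.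
  have Q0 : 0 <= Q by rewrite /Q !mulr_ge0 ?ler0n ?exprn_ge0 ?ler0n.
  have eQ : c * d%:R * (cut_edges e S)%:R = Q by rewrite /c /Q; ring.
  set l1 : R := l.+1%:R.
  have l10 : 0 <= l1 by rewrite /l1 ler0n.
  have eB : 2 * d%:R * eps * (cut_edges e S)%:R * l1 * (tau.+1)%:R ^+ l = 2 * l1 * Q.
    by rewrite /Q; ring.
  have eB' : 2 * d%:R * eps * (cut_edges e S)%:R * l.+2%:R * (tau.+1)%:R ^+ l.+1
     = 2 * (l1 + 1) * (Q * (tau%:R + 1)).
    by rewrite /Q /l1 exprSr -(addn1 l.+1) natrD tauS; ring.
  rewrite eQ eB'; rewrite eB in hrs.
  have h4 : tau%:R * Sr <= tau%:R * (2 * l1 * Q) by apply: ler_wpM2l.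
  have h5 : 0 <= Q * tau%:R by apply: mulr_ge0.
  nra.
move=> i j; cbn [gnn].
eapply le_trans; [apply: step_bound|].
apply: (@le_trans _ _ (\sum_k `|W1 l j k| * (c * V k * indic R S i + r i k)
   + \sum_k `|W2 l j k| * (\sum_i' (e i i')%:R * (c * V k * indic R S i' + r i' k)))).
  apply: lerD; apply: ler_sum => k _; apply: ler_wpM2l => //; try exact: hb.
  apply: ler_sum => i' _; apply: ler_wpM2l; first by rewrite ler0n.
  exact: hb.
have E1 : \sum_k `|W1 l j k| * (c * V k * indic R S i + r i k)
   = c * indic R S i * a1 j + b1 i j.
  rewrite /a1 /b1 mulr_sumr -big_split /=; apply: eq_bigr => k _; ring.
have E2 : \sum_k `|W2 l j k| * (\sum_i' (e i i')%:R * (c * V k * indic R S i' + r i' k))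
   = c * N i * a2 j + b2 i j.
  rewrite /a2 /b2 mulr_sumr -big_split /=; apply: eq_bigr => k _.
  have -> : \sum_i' (e i i')%:R * (c * V k * indic R S i' + r i' k)
     = c * V k * N i + \sum_i' (e i i')%:R * r i' k.
    rewrite /N mulr_sumr -big_split /=; apply: eq_bigr => i' _; ring.
  ring.
rewrite E1 E2.
have eV : eps * (tau.+1)%:R ^+ l.+1 * V' j = c * (a1 j + tau%:R * a2 j).
  rewrite /V' /c exprSr; field. by rewrite addrC -tauS lt0r_neq0.
rewrite eV /r' mxE.
have hN := @nbr_le R n e tau S und reg i.
rewrite -/(N i) in hN.
have := a20 j; have := a10 j.
rewrite /indic; case: (boolP (i \in S)) => hi /=.
  move=> h1 h2.
  have h3 : c * a2 j * N i <= c * a2 j * tau%:R.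
    by apply: ler_wpM2l => //; apply: mulr_ge0.
  nra.
move=> h1 h2; lra.
Qed.

Theorem mainTheorem9 (R : realFieldType) (n d tau : nat) (e : rel 'I_n)
  (S : {set 'I_n}) (W1 W2 : nat -> 'M[R]_d) (X alpha : 'M[R]_(n, d)) (eps : R) :
  undirected e -> regular e tau ->
  (forall l, norm11 (W1 l) <= 1) -> (forall l, norm11 (W2 l) <= 1) ->
  (forall i j, i \in S -> `|alpha i j| <= eps) ->
  (forall i j, i \notin S -> alpha i j = 0) ->
  let A := adjmx R e in
  let m := cut_edges e S in
  forall l : nat,
  let epsl := gnn A W1 W2 (X + alpha) l - gnn A W1 W2 X l in
  (exists (V : 'I_d -> R) (r : 'M[R]_(n, d)),
     [/\ (forall j, 0 <= V j), \sum_j V j <= d%:R,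
         \sum_i \sum_j `|r i j| <= 2 * d%:R * eps * m%:R * l.+1%:R * (tau.+1)%:R ^+ l
       & forall i j, `|epsl i j| <= eps * (tau.+1)%:R ^+ l * V j * indic R S i + r i j])
  /\ \sum_(i | i \notin S) \sum_j `|epsl i j|
       <= 2 * d%:R * eps * m%:R * l.+1%:R * (tau.+1)%:R ^+ l.
Proof.
move=> und reg hW1 hW2 haS haT A m l epsl.
case: (lerP 0 eps) => heps.
  have [V [r [hV0 hVs hr0 hrs hb]]] :=
    @main_pos R n d tau e S W1 W2 X alpha eps und reg hW1 hW2 haS haT heps l.
  split.
    exists V, r; split => //.
    under eq_bigr => i _ do under eq_bigr => j _ do rewrite ger0_norm ?hr0 //.
    exact: hrs.
  apply: (@le_trans _ _ (\sum_(i | i \notin S) \sum_j r i j)).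
    apply: ler_sum => i hi; apply: ler_sum => j _.
    apply: le_trans (hb i j) _.
    by rewrite /indic (negbTE hi) mulr0 add0r.
  apply: le_trans _ hrs.
  rewrite [X in _ <= X](bigID (fun i => i \notin S)) /= lerDl.
  by apply: sumr_ge0 => i _; apply: sumr_ge0 => j _.
have a0 : forall i j, alpha i j = 0.
  move=> i j; case: (boolP (i \in S)) => hi; last exact: haT.
  have := haS i j hi; have := normr_ge0 (alpha i j) => h1 h2; lra.
have ealpha : alpha = 0 by apply/matrixP => i j; rewrite mxE a0.
have E : epsl = 0 by rewrite /epsl ealpha addr0 subrr.
have hz : (d == 0)%N || (m == 0)%N.
  case: (posnP d) => // hd; case: (posnP m) => [|hm]; first by rewrite orbT.
  exfalso; move: hm; rewrite /m /cut_edges => /card_gt0P [p].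
  rewrite inE => /and3P [hp1 _ _].
  have := haS p.1 (Ordinal hd) hp1; have := normr_ge0 (alpha p.1 (Ordinal hd)).
  move=> h1 h2; lra.
have B0 : 2 * d%:R * eps * m%:R * l.+1%:R * (tau.+1)%:R ^+ l = 0 :> R.
  by case/orP: hz => /eqP ->; rewrite !(mulr0, mul0r).
rewrite B0; split.
  exists (fun _ => 0), 0; split => //.
  - by rewrite big1.
  - by rewrite big1 // => i _; rewrite big1 // => j _; rewrite mxE normr0.
  - by move=> i j; rewrite E !mxE normr0 !(mulr0, mul0r) addr0.
rewrite big1 // => i _; rewrite big1 // => j _; by rewrite E mxE normr0.
Qed.
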